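(* Let $(x_+,x_-,1)$ be an efficient solution of the QCQP (i.e. with robustness level $r=1$). Let $v=(1,x_+^T,x_-^T,1)^T\in\mathbb{R}^{2n+2}$. Then the rank-one matrix $Z=vv^T$ is feasible and efficient for the SDP relaxation.
   Context: Let $k,m,n\in\mathbb{N}$. Let $A_c,A_\delta\in\mathbb{R}^{m\times n}$ with $A_\delta\ge 0$ entrywise, $b_c,b_\delta\in\mathbb{R}^m$ with $b_\delta\ge0$, $G\in\mathbb{R}^{k\times n}$, and $\ell,u\in\mathbb{R}^n$ with $\ell\le u$. All vector inequalities are componentwise. QCQP: variables $x_+,x_-\in\mathbb{R}^n_{\ge0}$, $r\in[0,1]$, subject to $A_cx_+-A_cx_-+rA_\delta x_++rA_\delta x_-+rb_\delta-b_c\le0$ and $\ell\le x_+-x_-\le u$; vector objective $F(x_+,x_-,r)=(G(x_+-x_-),-r)\in\mathbb{R}^{k+1}$, minimized in the Pareto sense. SDP relaxation: variable a symmetric positive semidefinite matrix $Z$ of size $(2n+2)\times(2n+2)$ written in block form with row/column blocks of sizes $1,n,n,1$: $Z=\begin{pmatrix} Z_{00} & z_+^T & z_-^T & \rho\\ z_+ & * & * & w_+\\ z_- & * & * & w_-\\ \rho & w_+^T & w_-^T & \sigma\end{pmatrix}$, with $z_\pm,w_\pm\in\mathbb{R}^n$, $\rho,\sigma\in\mathbb{R}$. Constraints: $Z_{00}=1$; $A_cz_+-A_cz_-+A_\delta(w_++w_-)+\rho\, b_\delta-b_c\le0$; $\ell\le z_+-z_-\le u$; $z_+,z_-\ge0$,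 $\rho\ge0$, $w_+,w_-\ge0$; $\sigma\le1$. Vector objective $(G(z_+-z_-),-\rho)\in\mathbb{R}^{k+1}$, minimized in the Pareto sense. Efficiency (for minimizing a vector function $f$ over a feasible set $\mathcal{X}$): $x^*\in\mathcal{X}$ is efficient if there is no $x\in\mathcal{X}$ with $f(x)\le f(x^* )$ and $f(x)\ne f(x^* )$. *)

(* Defs.v *)
From HB Require Import structures.
From mathcomp Require Import all_boot all_order all_algebra.
Set Implicit Arguments. Unset Strict Implicit. Unset Printing Implicit Defensive.
Import Order.TTheory GRing.Theory Num.Theory.
Local Open Scope ring_scope.

Section Defs.
Variable R : realFieldType.

Definition mle (p q : nat) (A B : 'M[R]_(p, q)) : Prop :=
  forall i j, A i j <= B i j.

Definition efficient (X : Type) (p : nat) (S : X -> Prop) (f : X -> 'cV[R]_p)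
  (x : X) : Prop :=
  S x /\ ~ (exists y, S y /\ mle (f y) (f x) /\ f y <> f x).

Definition qcqp_feasible (m n : nat) (Ac Ad : 'M[R]_(m, n)) (bc bd : 'cV[R]_m)
  (l u : 'cV[R]_n) (x : 'cV[R]_n * 'cV[R]_n * R) : Prop :=
  let: (xp, xm, r) := x in
  [/\ mle 0 xp, mle 0 xm, 0 <= r /\ r <= 1,
      mle (Ac *m xp - Ac *m xm + r *: (Ad *m xp) + r *: (Ad *m xm)
           + r *: bd - bc) 0
    & mle l (xp - xm) /\ mle (xp - xm) u].

Definition qcqp_obj (k n : nat) (G : 'M[R]_(k, n))
  (x : 'cV[R]_n * 'cV[R]_n * R) : 'cV[R]_(k + 1) :=
  let: (xp, xm, r) := x in col_mx (G *m (xp - xm)) (- r)%:M.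

(** Block indices of a (1+n+n+1) x (1+n+n+1) matrix, blocks of sizes 1,n,n,1. *)
Definition idx0 (n : nat) : 'I_(1 + n + n + 1) :=
  lshift 1 (lshift n (lshift n (ord0 : 'I_1))).
Definition idxP (n : nat) (i : 'I_n) : 'I_(1 + n + n + 1) :=
  lshift 1 (lshift n (rshift 1 i)).
Definition idxM (n : nat) (i : 'I_n) : 'I_(1 + n + n + 1) :=
  lshift 1 (rshift (1 + n) i).
Definition idxL (n : nat) : 'I_(1 + n + n + 1) :=
  rshift (1 + n + n) (ord0 : 'I_1).

Section Blocks.
Variables (n : nat) (Z : 'M[R]_(1 + n + n + 1)).
Definition Z00 : R := Z (idx0 n) (idx0 n).
Definition zP : 'cV[R]_n := \col_i Z (idxP i) (idx0 n).
Definition zM : 'cV[R]_n := \col_i Z (idxM i) (idx0 n).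
Definition rho : R := Z (idxL n) (idx0 n).
Definition wP : 'cV[R]_n := \col_i Z (idxP i) (idxL n).
Definition wM : 'cV[R]_n := \col_i Z (idxM i) (idxL n).
Definition sigma : R := Z (idxL n) (idxL n).
End Blocks.

Definition psd (N : nat) (Z : 'M[R]_N) : Prop :=
  Z^T = Z /\ forall x : 'cV[R]_N, 0 <= (x^T *m Z *m x) ord0 ord0.

Definition sdp_feasible (m n : nat) (Ac Ad : 'M[R]_(m, n)) (bc bd : 'cV[R]_m)
  (l u : 'cV[R]_n) (Z : 'M[R]_(1 + n + n + 1)) : Prop :=
  [/\ psd Z, Z00 Z = 1,
      mle (Ac *m zP Z - Ac *m zM Z + Ad *m (wP Z + wM Z) + rho Z *: bd - bc) 0,
      mle l (zP Z - zM Z) /\ mle (zP Z - zM Z) u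
    & [/\ mle 0 (zP Z), mle 0 (zM Z), 0 <= rho Z,
          mle 0 (wP Z) /\ mle 0 (wM Z) & sigma Z <= 1]].

Definition sdp_obj (k n : nat) (G : 'M[R]_(k, n)) (Z : 'M[R]_(1 + n + n + 1))
  : 'cV[R]_(k + 1) :=
  col_mx (G *m (zP Z - zM Z)) (- rho Z)%:M.

Definition vvec (n : nat) (xp xm : 'cV[R]_n) : 'cV[R]_(1 + n + n + 1) :=
  col_mx (col_mx (col_mx 1 xp) xm) 1.

End Defs.

(* Main.v *)
Require Import Defs.
From HB Require Import structures.
From mathcomp Require Import all_boot all_order all_algebra.
From mathcomp Require Import ring lra.
Import Order.TTheory GRing.Theory Num.Theory.
Local Open Scope ring_scope.

Section Bil.
Variables (R : realFieldType) (N : nat) (Z : 'M[R]_N).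
Definition B (x y : 'cV[R]_N) : R := (x^T *m Z *m y) ord0 ord0.

Lemma BDr x y1 y2 : B x (y1 + y2) = B x y1 + B x y2.
Proof. by rewrite /B mulmxDr mxE. Qed.
Lemma BDl x1 x2 y : B (x1 + x2) y = B x1 y + B x2 y.
Proof. by rewrite /B linearD /= !mulmxDl mxE. Qed.
Lemma BZr a x y : B x (a *: y) = a * B x y.
Proof. by rewrite /B -scalemxAr mxE. Qed.
Lemma BZl a x y : B (a *: x) y = a * B x y.
Proof. by rewrite /B linearZ /= -!scalemxAl mxE. Qed.
Lemma BN x y : B x (- y) = - B x y.
Proof. by rewrite -scaleN1r BZr mulN1r. Qed.
Lemma BNl x y : B (- x) y = - B x y.
Proof. by rewrite -scaleN1r BZl mulN1r. Qed.
Lemma Bsym : Z^T = Z -> forall x y, B x y = B y x.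
Proof.
move=> hZ x y; rewrite /B.
have -> : (x^T *m Z *m y) ord0 ord0 = ((x^T *m Z *m y)^T) ord0 ord0 by rewrite [RHS]mxE.
by rewrite !trmx_mul trmxK hZ mulmxA.
Qed.
Lemma Be i j : B (delta_mx i ord0) (delta_mx j ord0) = Z i j.
Proof.
by rewrite /B trmx_delta (_ : delta_mx ord0 i = delta_mx 0 i) // (_ : delta_mx j ord0 = delta_mx j 0) // -rowE -colE !mxE.
Qed.

Lemma psd_ker : psd Z -> forall x y, B x x = 0 -> B y x = 0.
Proof.
move=> [hZ hq] x y hx.
have H t : 0 <= B (x + t *: y) (x + t *: y) by apply: hq.
move: H; rewrite /= => H.
have E t : B (x + t *: y) (x + t *: y) = 2 * t * B y x + t ^+ 2 * B y y.
  rewrite BDl !BDr !BZl !BZr hx (Bsym hZ x y); ring.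
have hb : 0 <= B y y by apply: hq.
set a := B y x; set b := B y y.
have [//|ha] := eqVneq a 0; exfalso.
have := H (- a / (b + 1)); rewrite E -/a -/b => H1.
have hb1 : 0 < b + 1 by rewrite -/b in hb; lra.
have : 2 * (- a / (b + 1)) * a + (- a / (b + 1)) ^+ 2 * b = a ^+ 2 * (- b - 2) / (b + 1) ^+ 2.
  by field; rewrite gt_eqF.
move=> E2; rewrite E2 in H1.
have ha2 : 0 < a ^+ 2 by rewrite lt_def sqr_ge0 sqrf_eq0 ha.
have h3 : a ^+ 2 * (- b - 2) / (b + 1) ^+ 2 < 0.
  rewrite ltr_pdivrMr ?exprn_gt0 // mul0r; nra.
by move: h3; rewrite ltNge H1.
Qed.
End Bil.
Arguments B {R N} Z x y.
Arguments Bsym {R N Z}.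
Arguments psd_ker {R N Z}.

Section Main.
Variables (R : realFieldType) (n : nat) (xp xm : 'cV[R]_n).
Let v := vvec xp xm.

Lemma v0 : v (idx0 n) ord0 = 1.
Proof. by rewrite /v /vvec /idx0 !col_mxEu mxE. Qed.
Lemma vL : v (idxL n) ord0 = 1.
Proof. by rewrite /v /vvec /idxL col_mxEd mxE. Qed.
Lemma vP i : v (idxP i) ord0 = xp i ord0.
Proof. by rewrite /v /vvec /idxP !col_mxEu col_mxEd. Qed.
Lemma vM i : v (idxM i) ord0 = xm i ord0.
Proof. by rewrite /v /vvec /idxM col_mxEu col_mxEd. Qed.
Lemma vvE i j : (v *m v^T) i j = v i ord0 * v j ord0.
Proof. by rewrite mxE big_ord1 [v^T _ _]mxE. Qed.

Lemma ZzP : zP (v *m v^T) = xp.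
Proof. by apply/matrixP => i j; rewrite mxE vvE vP v0 mulr1 (ord1 j). Qed.
Lemma ZzM : zM (v *m v^T) = xm.
Proof. by apply/matrixP => i j; rewrite mxE vvE vM v0 mulr1 (ord1 j). Qed.
Lemma ZwP : wP (v *m v^T) = xp.
Proof. by apply/matrixP => i j; rewrite mxE vvE vP vL mulr1 (ord1 j). Qed.
Lemma ZwM : wM (v *m v^T) = xm.
Proof. by apply/matrixP => i j; rewrite mxE vvE vM vL mulr1 (ord1 j). Qed.
Lemma Zrho : rho (v *m v^T) = 1.
Proof. by rewrite /rho vvE vL v0 mulr1. Qed.
Lemma Zsigma : sigma (v *m v^T) = 1.
Proof. by rewrite /sigma vvE vL mulr1. Qed.
Lemma Z00E : Z00 (v *m v^T) = 1.
Proof. by rewrite /Z00 vvE v0 mulr1. Qed.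
Lemma Zpsd : psd (v *m v^T).
Proof.
split; first by rewrite trmx_mul trmxK.
move=> x; rewrite !mulmxA -mulmxA.
have -> : v^T *m x = (x^T *m v)^T by rewrite trmx_mul trmxK.
by rewrite mxE big_ord1 [(x^T *m v)^T _ _]mxE -expr2 sqr_ge0.
Qed.
End Main.

Lemma tight (R : realFieldType) (n : nat) (Y : 'M[R]_(1 + n + n + 1)) :
  psd Y -> Z00 Y = 1 -> sigma Y <= 1 -> 1 <= rho Y ->
  rho Y = 1 /\ forall j, Y j (idx0 n) = Y j (idxL n).
Proof.
move=> hY h00 hs hr.
have hsym := Bsym (proj1 hY).
have hZs : Y (idx0 n) (idxL n) = Y (idxL n) (idx0 n).
  by rewrite -!Be hsym.
pose e0 : 'cV[R]_(1+n+n+1) := delta_mx (idx0 n) ord0.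
pose eL : 'cV[R]_(1+n+n+1) := delta_mx (idxL n) ord0.
have hq := proj2 hY (rho Y *: e0 - eL).
have : 0 <= B Y (rho Y *: e0 - eL) (rho Y *: e0 - eL) by [].
rewrite BDl !BDr !BZl !BNl !BZr !BN !Be hZs.
move: h00 hs hr; rewrite /Z00 /sigma /rho => h00 hs hr hq2.
have hr1 : Y (idxL n) (idx0 n) = 1 by nra.
have hs1 : Y (idxL n) (idxL n) = 1 by nra.
split => // j.
have hk : B Y (e0 - eL) (e0 - eL) = 0.
  rewrite BDl !BDr !BNl !BN !Be hZs hr1 h00 hs1; lra.
have := psd_ker hY (e0 - eL) (delta_mx j ord0) hk.
rewrite BDr BN !Be => /eqP; rewrite subr_eq0 => /eqP //.
Qed.

Lemma objL (R : realFieldType) (k n : nat) (G : 'M[R]_(k, n)) (Y : 'M[R]_(1 + n + n + 1)) :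
  sdp_obj G Y (rshift k (ord0 : 'I_1)) ord0 = - rho Y.
Proof. by rewrite /sdp_obj col_mxEd mxE mulr1n. Qed.

Theorem mainTheorem5 (R : realFieldType) (k m n : nat)
  (Ac Ad : 'M[R]_(m, n)) (bc bd : 'cV[R]_m) (G : 'M[R]_(k, n))
  (l u : 'cV[R]_n)
  (hAd : mle 0 Ad) (hbd : mle 0 bd) (hlu : mle l u)
  (xp xm : 'cV[R]_n) :
  efficient (qcqp_feasible Ac Ad bc bd l u) (qcqp_obj G) (xp, xm, 1) ->
  let v := vvec xp xm in
  let Z := v *m v^T in
  sdp_feasible Ac Ad bc bd l u Z /\
  efficient (sdp_feasible Ac Ad bc bd l u) (sdp_obj G) Z.
Proof.
move=> [hf hnd] v Z.
have objZ : sdp_obj G Z = qcqp_obj G (xp, xm, 1).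
  by rewrite /sdp_obj /qcqp_obj /Z /v ZzP ZzM Zrho.
have fZ : sdp_feasible Ac Ad bc bd l u Z.
  move: hf => [h1 h2 h3 h4 h5].
  rewrite /sdp_feasible /Z /v ZzP ZzM ZwP ZwM Zrho Zsigma Z00E.
  split => //; first exact: Zpsd.
  - by move: h4; rewrite !scale1r mulmxDr !addrA.
split => //; split => // -[Y [fY [hle hne]]].
apply: hnd.
have hrY : 1 <= rho Y.
  have := hle (rshift k ord0) ord0; rewrite !objL /Z /v Zrho; lra.
case: fY => hpsd h00 hc hb [hzp hzm hrho [hwp hwm] hsig].
have [r1 hcol] := @tight _ _ Y hpsd h00 hsig hrY.
have ewP : wP Y = zP Y by apply/matrixP => i j; rewrite !mxE hcol.
have ewM : wM Y = zM Y by apply/matrixP => i j; rewrite !mxE hcol.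
have objY : sdp_obj G Y = qcqp_obj G (zP Y, zM Y, 1).
  by rewrite /sdp_obj /qcqp_obj r1.
have hc' : mle (Ac *m zP Y - Ac *m zM Y + 1 *: (Ad *m zP Y) + 1 *: (Ad *m zM Y) + 1 *: bd - bc) 0.
  by move: hc; rewrite ewP ewM r1 !scale1r mulmxDr !addrA.
exists (zP Y, zM Y, 1); rewrite -objY -objZ; split; last by split.
have h01 : (0:R) <= 1 /\ (1:R) <= 1 by rewrite ler01 lexx.
by split.
Qed.
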